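(* Let $\mathcal{S}$ be a finite set of road segments and $y_1,\dots,y_N$ (collectively $y_{[N]}$) the routes of $N$ historical trips, each a nonempty set of distinct segments. For each $n$ and $s\in y_n$ one observes $T'_{n,s}=\theta_s+\varepsilon_{n,s}$, where the $\theta_s$ are i.i.d. with mean $\mu$ and variance $\tau^2>0$, independent of the errors; for each $n$ the errors $(\varepsilon_{n,s})_{s\in y_n}$ have mean $0$ and covariances $\sigma_{s,t}$; errors from different trips are independent. Fix a route $y$ and suppose $\sigma_{s,t}\ge0$ for all $s,t\in y$. Let $\hat\Theta^{\ast(\mathrm{seg})}_y$ be the optimal segment-based estimator, $\hat\Theta^{\ast(\mathrm{g\text{-}seg})}_y$ the optimal generalized segment-based estimator with the single super-segment partition $\mathscr{S}_y=\{y\}$, and $\hat\Theta^{\ast(\mathrm{route})}_y$ the optimal route-based estimator with neighborhood $\delta(y)=\{y_n:y_n=y\}$. Then for any set of historical routes, $$R\big(\hat\Theta^{\ast(\mathrm{seg})}_y\mid y_{[N]}\big)\le R\big(\hat\Theta^{\ast(\mathrm{g\text{-}seg})}_y\mid y_{[N]}\big)\le R\big(\hat\Theta^{\ast(\mathrm{route})}_y\mid y_{[N]}\big).$$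
   Context: Convention $0/0=0$. $N_s=|\{n:s\in y_n\}|$; for a set $S$ of segments $N_S=|\{n:S\subseteq y_n\}|$; $M_{\delta(y)}=\sum_n\mathbf 1\{y_n\in\delta(y)\}$. The integrated risk is $R(\hat\Theta_y\mid y_{[N]})=\mathbb{E}[(\hat\Theta_y-\sum_{s\in y}\theta_s)^2\mid y_{[N]}]$, expectation over errors and prior of $\theta$, conditional on the historical routes. Segment-based estimator: $\sum_{s\in y}[(1-\phi_s(N_s))\mu+\phi_s(N_s)\sum_{n:s\in y_n}T'_{n,s}/N_s]$, $\phi_s(0)=0$. Generalized segment-based estimator with partition $\mathscr{S}_y$ of $y$ into disjoint nonempty super-segments: $\sum_{S\in\mathscr{S}_y}[(1-\phi_S(N_S))|S|\mu+\phi_S(N_S)\sum_{n:S\subseteq y_n}\sum_{s\in S}T'_{n,s}/N_S]$, $\phi_S(0)=0$. Route-based estimator with neighborhood $\delta(y)$ (a set of historical routes): $(1-\phi_{\delta(y)}(M_{\delta(y)}))|y|\mu+\phi_{\delta(y)}(M_{\delta(y)})\sum_{n:y_n\in\delta(y)}\sum_{s\in y_n}T'_{n,s}/M_{\delta(y)}$, $\phi_{\delta(y)}(0)=0$. In each class, ''optimal'' means the weights are chosen to minimize the integrated risk. *)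

(* Defs.v *)
From HB Require Import structures.
From mathcomp Require Import all_boot all_order all_algebra.
From mathcomp Require Import all_classical all_reals all_analysis.
Set Implicit Arguments. Unset Strict Implicit. Unset Printing Implicit Defensive.
Import Order.TTheory GRing.Theory Num.Theory.
Local Open Scope classical_set_scope.
Local Open Scope ring_scope.

Section Defs.
Context {d : measure_display} {T : measurableType d} {R : realType}.
Context (P : probability T R).

(** Mutual independence of groups of real random variables: the random
    variables X k (k in the admissible index set A) are partitioned into groups
    by g; the groups (i.e. the random vectors (X k)_{g k = i}) are mutually
    independent. *)
Definition groups_independent (K I : finType) (g : K -> I) (A : {set K})
    (X : K -> T -> R) : Prop :=
  forall (F : {set K}) (B : K -> set R),
    F \subset A -> (forall k, measurable (B k)) ->
    P (\big[setI/setT]_(k in F) (X k @^-1` B k)) =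
    (\prod_(i in g @: F)
        P (\big[setI/setT]_(k in F | g k == i) (X k @^-1` B k)))%E.

End Defs.

Section Model.
Context {R : realType} {S : finType} {N : nat}.

(** Index type of all random variables of the model: theta_s (inl s) and
    the errors eps_{n,s} (inr (n, s)). *)
Definition rv_index := (S + ('I_N * S))%type.

Definition rv_group (k : rv_index) : (S + 'I_N)%type :=
  match k with inl s => inl s | inr (n, _) => inr n end.

(** Only errors eps_{n,s} with s in y_n exist. *)
Definition rv_relevant (yn : 'I_N -> {set S}) : {set rv_index} :=
  [set k | match k with inl _ => true | inr (n, s) => s \in yn n end].

Definition rv_family {T : Type} (theta : S -> T -> R) (eps : 'I_N -> S -> T -> R)
  (k : rv_index) : T -> R :=
  match k with inl s => theta s | inr (n, s) => eps n s end.

Definition Tobs {T : Type} (theta : S -> T -> R) (eps : 'I_N -> S -> T -> R)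
  (n : 'I_N) (s : S) : T -> R := fun w => theta s w + eps n s w.

Definition Nseg (yn : 'I_N -> {set S}) (s : S) : nat := #|[set n | s \in yn n]|.
Definition Nsup (yn : 'I_N -> {set S}) (A : {set S}) : nat :=
  #|[set n | A \subset yn n]|.
Definition Mnb (yn : 'I_N -> {set S}) (delta : {set {set S}}) : nat :=
  #|[set n | yn n \in delta]|.

(** Segment-based estimator (x / 0 = 0 in MathComp, matching 0/0 = 0). *)
Definition seg_est {T : Type} (yn : 'I_N -> {set S}) (theta : S -> T -> R)
  (eps : 'I_N -> S -> T -> R) (mu : R) (y : {set S}) (phi : S -> R) : T -> R :=
  fun w => \sum_(s in y)
    ((1 - phi s) * mu
     + phi s * ((\sum_(n | s \in yn n) Tobs theta eps n s w) / (Nseg yn s)%:R)).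

Definition gseg_est {T : Type} (yn : 'I_N -> {set S}) (theta : S -> T -> R)
  (eps : 'I_N -> S -> T -> R) (mu : R) (Sy : {set {set S}})
  (phi : {set S} -> R) : T -> R :=
  fun w => \sum_(A in Sy)
    ((1 - phi A) * #|A|%:R * mu
     + phi A * ((\sum_(n | A \subset yn n) \sum_(s in A) Tobs theta eps n s w)
                 / (Nsup yn A)%:R)).

Definition route_est {T : Type} (yn : 'I_N -> {set S}) (theta : S -> T -> R)
  (eps : 'I_N -> S -> T -> R) (mu : R) (y : {set S}) (delta : {set {set S}})
  (phi : R) : T -> R :=
  fun w => (1 - phi) * #|y|%:R * mu
    + phi * ((\sum_(n | yn n \in delta) \sum_(s in yn n) Tobs theta eps n s w)
              / (Mnb yn delta)%:R).

Definition seg_weights (yn : 'I_N -> {set S}) : set (S -> R) :=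
  [set phi | forall s, Nseg yn s = 0%N -> phi s = 0].
Definition gseg_weights (yn : 'I_N -> {set S}) : set ({set S} -> R) :=
  [set phi | forall A, Nsup yn A = 0%N -> phi A = 0].
Definition route_weights (yn : 'I_N -> {set S}) (delta : {set {set S}}) : set R :=
  [set phi | Mnb yn delta = 0%N -> phi = 0].

Definition same_route_nb (yn : 'I_N -> {set S}) (y : {set S}) : {set {set S}} :=
  [set yn n | n : 'I_N & yn n == y].

End Model.

Section Risk.
Context {d : measure_display} {T : measurableType d} {R : realType} {S : finType}.
Context (P : probability T R).

(** Integrated risk R(Theta_hat | y_[N]) = E[(Theta_hat - sum_{s in y} theta_s)^2]
    (the routes are fixed, i.e. conditioned upon). *)
Definition risk (theta : S -> T -> R) (y : {set S}) (est : T -> R) : \bar R :=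
  'E_P[fun w => (est w - \sum_(s in y) theta s w) ^+ 2].

(** Risk of the optimal estimator of a class: the least risk over admissible
    weights (infimum, which is the minimum when the optimum is attained). *)
Definition opt_risk {W : Type} (theta : S -> T -> R) (y : {set S})
  (weights : set W) (est : W -> T -> R) : \bar R :=
  ereal_inf [set risk theta y (est phi) | phi in weights].

End Risk.

(* Main.v *)
Require Import Defs.
From HB Require Import structures.
From mathcomp Require Import all_boot all_order all_algebra.
From mathcomp Require Import all_classical all_reals all_analysis.
From mathcomp Require Import measurable_realfun.
From mathcomp Require Import ring lra.
Import Order.TTheory GRing.Theory Num.Theory.
Local Open Scope classical_set_scope.
Local Open Scope ring_scope.
Set Implicit Arguments. Unset Strict Implicit.

Definition pair_fun d (T : measurableType d) (R : realType) (X Y : T -> R) : T -> R * R :=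
  fun w => (X w, Y w).

HB.instance Definition _ d (T : measurableType d) (R : realType) (X Y : {mfun T >-> R}) :=
  isMeasurableFun.Build _ _ _ _ (pair_fun X Y)
    (measurable_fun_pair (@measurable_funP _ _ _ _ setT X) (@measurable_funP _ _ _ _ setT Y)).

Lemma indep_expM d (T : measurableType d) (R : realType) (P : probability T R)
  (X Y : {RV P >-> R}) :
  (X : T -> R) \in Lfun P 1 -> (Y : T -> R) \in Lfun P 1 -> (X \* Y)%R \in Lfun P 1 ->
  (forall A B, measurable A -> measurable B ->
     P (X @^-1` A `&` Y @^-1` B) = (P (X @^-1` A) * P (Y @^-1` B))%E) ->
  ('E_P[(X \* Y)%R] = 'E_P[X] * 'E_P[Y])%E.
Proof.
move=> X1 Y1 XY1 ind.
pose PX := distribution P X. pose PY := distribution P Y.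
pose h := pair_fun X Y.
pose Q := distribution P h.
pose f := fun z : R * R => (z.1 * z.2)%:E.
have mh : measurable_fun setT h := @measurable_funP _ _ _ _ setT h.
have mf : measurable_fun [set: R * R] f.
  apply/measurable_EFinP; apply: measurable_funM; [exact: measurable_fst | exact: measurable_snd].
have QE : forall A, measurable A -> (PX \x PY)%E A = Q A.
  apply: product_measure_unique => A B mA mB /=.
  rewrite /Q /distribution /pushforward.
  rewrite (_ : h @^-1` (A `*` B) = X @^-1` A `&` Y @^-1` B) //.
  exact: ind.
have intP : P.-integrable (h @^-1` setT) (f \o h).
  rewrite preimage_setT; apply/Lfun1_integrable; exact: XY1.
have intQ : Q.-integrable setT f.
  exact: (integrable_pushforward mh mf intP).
have intPQ : (PX \x PY)%E.-integrable setT f.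
  apply/integrableP; split => //.
  rewrite (eq_measure_integral Q); last by move=> A mA _; exact: QE.
  by move/integrableP : intQ => [].
have intX : PX.-integrable setT EFin.
  apply: (integrable_pushforward (@measurable_funP _ _ _ _ setT X)).
    exact/measurable_EFinP.
  by rewrite preimage_setT; apply/Lfun1_integrable.
  exact: measurableT.
have intY : PY.-integrable setT EFin.
  apply: (integrable_pushforward (@measurable_funP _ _ _ _ setT Y)).
    exact/measurable_EFinP.
  by rewrite preimage_setT; apply/Lfun1_integrable.
  exact: measurableT.
have EX : ('E_P[X] = \int[PX]_x x%:E)%E.
  rewrite expectation_def integral_distribution //; [by apply/Lfun1_integrable|by []..].
have EY : ('E_P[Y] = \int[PY]_x x%:E)%E.
  rewrite expectation_def integral_distribution //; [by apply/Lfun1_integrable|by []..].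
have EXY : ('E_P[(X \* Y)%R] = \int[Q]_z f z)%E.
  rewrite unlock integral_distribution //; exact: measurableT.
rewrite EXY (eq_measure_integral (PX \x PY)%E); last by move=> A mA _; exact/esym/QE.
rewrite -integral12_prod_meas1 //.
rewrite /fubini_F /=.
under eq_integral => x _.
  rewrite (_ : (fun y => _) = (fun y => x%:E * y%:E)%E); last first.
    by apply/funext => y; rewrite /f /= EFinM.
  rewrite integralZl //.
  over.
have fY := expectation_fin_num Y1.
by rewrite -EY -(fineK fY) integralZr // -EX.
Qed.
Lemma groups_indep_pair d (T : measurableType d) (R : realType) (P : probability T R)
  (K I : finType) (g : K -> I) (Aset : {set K}) (X : K -> T -> R) k1 k2 :
  groups_independent P g Aset X -> k1 \in Aset -> k2 \in Aset -> g k1 != g k2 ->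
  forall A B, measurable A -> measurable B ->
  P (X k1 @^-1` A `&` X k2 @^-1` B) = (P (X k1 @^-1` A) * P (X k2 @^-1` B))%E.
Proof.
move=> gi h1 h2 g12 A B mA mB.
have k12 : k1 != k2 by apply: contraNneq g12 => ->.
pose Bf k := if k == k1 then A else if k == k2 then B else setT.
have mBf : forall k, measurable (Bf k).
  by move=> k; rewrite /Bf; case: ifP => _ //; case: ifP.
have sub : [set k1; k2]%SET \subset Aset.
  by apply/fintype.subsetP => k; rewrite !inE; case/orP => /eqP->.
have := gi [set k1; k2]%SET Bf sub mBf.
have n12 : k1 \notin [set k2]%SET by rewrite inE.
rewrite big_setU1 //= big_set1.
have e1 : Bf k1 = A by rewrite /Bf eqxx.
have e2 : Bf k2 = B by rewrite /Bf eq_sym (negbTE k12) eqxx.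
rewrite e1 e2 => ->.
rewrite imsetU1 imset_set1 big_setU1 /=; last by rewrite inE.
rewrite big_set1.
rewrite (big_pred1 k1); last first.
  move=> k /=; rewrite !inE; case: (eqVneq k k1) => [->|kk1]; first by rewrite eqxx.
  by case: (eqVneq k k2) => [->|] //=; rewrite eq_sym (negbTE g12).
rewrite (big_pred1 k2); last first.
  move=> k /=; rewrite !inE; case: (eqVneq k k2) => [->|kk2]; first by rewrite eqxx orbT.
  by case: (eqVneq k k1) => [->|] //=; rewrite (negbTE g12).
by rewrite e1 e2.
Qed.
Lemma card_mkset (I : finType) (Pb : pred I) :
  #|[set i | Pb i]| = #|[set i | Pb i]%SET|.
Proof.
apply: eq_card => i; rewrite [RHS]inE.
apply/idP/idP; rewrite in_setE //.
Qed.

Lemma NsegE (S : finType) (N : nat) (yn : 'I_N -> {set S}) s :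
  Nseg yn s = #|[set n | s \in yn n]%SET|.
Proof. exact: card_mkset. Qed.

Lemma NsupE (S : finType) (N : nat) (yn : 'I_N -> {set S}) A :
  Nsup yn A = #|[set n | A \subset yn n]%SET|.
Proof. exact: card_mkset. Qed.

Lemma MnbE (S : finType) (N : nat) (yn : 'I_N -> {set S}) dl :
  Mnb yn dl = #|[set n | yn n \in dl]%SET|.
Proof. exact: card_mkset. Qed.

Lemma sum_const_filter (R : realType) (I : finType) (Pr : pred I) (x : R) :
  \sum_(i | Pr i) x = #|[set i | Pr i]%SET|%:R * x.
Proof.
rewrite (eq_bigl (fun i => i \in [set i | Pr i]%SET)); last by move=> i; rewrite inE.
by rewrite sumr_const mulr_natl.
Qed.

Lemma S_ident (R : realType) (S : finType) (N : nat) (yn : 'I_N -> {set S})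
  (y : {set S}) (p mu : R) (psi : S -> R) (th : S -> R) (ep : 'I_N -> S -> R) :
  (forall s, s \in y -> psi s = p) ->
  (forall s, s \in y -> (0 < Nseg yn s)%N) ->
  \sum_(s in y) ((1 - psi s) * mu + psi s * ((\sum_(n | s \in yn n) (th s + ep n s)) / (Nseg yn s)%:R))
  - \sum_(s in y) th s
  = (1 - p) * \sum_(s in y) (mu - th s)
    + p * \sum_s \sum_n ((if s \in y then ((Nseg yn s)%:R)^-1 else 0)
                          * (if s \in yn n then ep n s else 0)).
Proof.
move=> hpsi hN.
have E : \sum_s \sum_n ((if s \in y then ((Nseg yn s)%:R)^-1 else 0)
                          * (if s \in yn n then ep n s else 0))
  = \sum_(s in y) \sum_n (((Nseg yn s)%:R)^-1 * (if s \in yn n then ep n s else 0)).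
  rewrite [RHS](big_mkcond (fun s => s \in y)) /=; apply: eq_bigr => s _.
  case: ifP => sy //.
  by rewrite big1 // => n _; rewrite mul0r.
rewrite E.
rewrite -sumrB mulr_sumr mulr_sumr -big_split /=.
apply: eq_bigr => s sy.
rewrite hpsi // big_split /= sum_const_filter.
rewrite (big_mkcond (fun n => s \in yn n)) /= -mulr_sumr.
have := hN s sy; rewrite NsegE => hN1.
have hN0 : #|[set n | s \in yn n]%SET|%:R != 0 :> R.
  by rewrite pnatr_eq0 -lt0n.
by field.
Qed.

Lemma G_ident (R : realType) (S : finType) (N : nat) (yn : 'I_N -> {set S})
  (y : {set S}) (Pn : pred 'I_N) (p mu : R) (th : S -> R) (ep : 'I_N -> S -> R) :
  (forall n, Pn n -> y \subset yn n) ->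
  (0 < #|[set n | Pn n]%SET|)%N ->
  (1 - p) * #|y|%:R * mu
    + p * ((\sum_(n | Pn n) \sum_(s in y) (th s + ep n s)) / #|[set n | Pn n]%SET|%:R)
  - \sum_(s in y) th s
  = (1 - p) * \sum_(s in y) (mu - th s)
    + p * \sum_s \sum_n ((if (s \in y) && Pn n then (#|[set n | Pn n]%SET|%:R)^-1 else 0)
                          * (if s \in yn n then ep n s else 0)).
Proof.
move=> hsub hK.
set K := #|[set n | Pn n]%SET|.
have hK0 : K%:R != 0 :> R by rewrite pnatr_eq0 -lt0n hK.
have E1 : \sum_(n | Pn n) \sum_(s in y) (th s + ep n s)
   = K%:R * \sum_(s in y) th s + \sum_(n | Pn n) \sum_(s in y) ep n s.
  rewrite -sum_const_filter -big_split /=.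
  by apply: eq_bigr => n _; rewrite big_split.
have E2 : \sum_s \sum_n ((if (s \in y) && Pn n then (K%:R)^-1 else 0)
                          * (if s \in yn n then ep n s else 0))
   = (K%:R)^-1 * \sum_(n | Pn n) \sum_(s in y) ep n s.
  rewrite exchange_big /= mulr_sumr (big_mkcond Pn) /=.
  apply: eq_bigr => n _.
  case: ifP => pn; last first.
    by apply: big1 => s _; rewrite andbF mul0r.
  rewrite mulr_sumr (big_mkcond (fun s => s \in y)) /=.
  apply: eq_bigr => s _; rewrite andbT.
  case: ifP => sy; last by rewrite mul0r.
  by have := fintype.subsetP (hsub n pn) s sy => ->.
rewrite E1 E2 sumrB sumr_const -mulr_natl.
field.
by [].
Qed.
Definition ER d (T : measurableType d) (R : realType) (P : probability T R) (f : T -> R) : R :=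
  fine ('E_P[f])%E.

Lemma ER_E d (T : measurableType d) (R : realType) (P : probability T R) (f : T -> R) :
  f \in Lfun P 1 -> ('E_P[f] = (ER P f)%:E)%E.
Proof. by move=> h; rewrite /ER fineK // expectation_fin_num. Qed.

Lemma Lfun_fsum d (T : measurableType d) (R : realType) (P : probability T R)
  (J : finType) (Pj : pred J) (F : J -> T -> R) (p : \bar R) :
  (1 <= p)%E -> (forall j, Pj j -> F j \in Lfun P p) ->
  (fun w => \sum_(j | Pj j) F j w) \in Lfun P p.
Proof.
move=> hp h; rewrite -fct_sumE; apply: rpred_sum => j Pjj; exact: h.
Qed.

Lemma ER_fsum d (T : measurableType d) (R : realType) (P : probability T R)
  (J : finType) (Pj : pred J) (F : J -> T -> R) :
  (forall j, Pj j -> F j \in Lfun P 1) ->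
  ER P (fun w => \sum_(j | Pj j) F j w) = \sum_(j | Pj j) ER P (F j).
Proof.
move=> h.
suff : forall r : seq J, (fun w => \sum_(j <- r | Pj j) F j w) \in Lfun P 1 /\
   ('E_P[(fun w => \sum_(j <- r | Pj j) F j w)%R] = ((\sum_(j <- r | Pj j) ER P (F j))%R)%:E)%E.
  by move=> /(_ (index_enum J)) [_]; rewrite /ER => ->.
elim => [|j r [Lr Er]].
  rewrite big_nil (_ : (fun w => _) = cst 0); last by apply/funext => w; rewrite big_nil.
  by split; [exact: Lfun_cst | exact: expectation_cst].
rewrite big_cons.
have -> : (fun w => \sum_(i <- j :: r | Pj i) F i w)
   = (fun w => (if Pj j then F j w else 0) + \sum_(i <- r | Pj i) F i w).
  by apply/funext => w; rewrite big_cons; case: ifP; rewrite ?add0r.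
case: ifP => Pjj; last first.
  rewrite (_ : (fun w => _) = (fun w => \sum_(i <- r | Pj i) F i w)) //.
  by apply/funext => w; rewrite add0r.
have hj := h j Pjj.
have e1 : (fun w => F j w + \sum_(i <- r | Pj i) F i w) = (F j \+ (fun w => \sum_(i <- r | Pj i) F i w))%R by [].
rewrite e1; split; first by apply: rpredD.
by rewrite expectationD // Er ER_E.
Qed.

Lemma ER_scale d (T : measurableType d) (R : realType) (P : probability T R)
  (a : R) (f : T -> R) :
  f \in Lfun P 1 -> ER P (fun w => a * f w) = a * ER P f.
Proof.
move=> h; have E := expectationZl a h.
transitivity (fine ('E_P[(a \o* f)%R])%E).
  by rewrite /ER; congr (fine 'E_P[_])%E; apply/funext => w /=; rewrite mulrC.
rewrite E.
by rewrite fineM // expectation_fin_num.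
Qed.

Lemma ER_add d (T : measurableType d) (R : realType) (P : probability T R)
  (f g : T -> R) :
  f \in Lfun P 1 -> g \in Lfun P 1 -> ER P (fun w => f w + g w) = ER P f + ER P g.
Proof.
move=> hf hg; have E := expectationD hf hg.
transitivity (fine ('E_P[(f \+ g)%R])%E); first by [].
rewrite E.
by rewrite fineD // expectation_fin_num.
Qed.

Lemma ER_cst d (T : measurableType d) (R : realType) (P : probability T R) (c : R) :
  ER P (fun _ => c) = c.
Proof. by rewrite /ER (_ : (fun _ => c) = cst c) // expectation_cst. Qed.

Lemma Lfun_mul1 d (T : measurableType d) (R : realType) (P : probability T R)
  (f g : T -> R) :
  f \in Lfun P 2%:E -> g \in Lfun P 2%:E -> (fun w => f w * g w) \in Lfun P 1.
Proof. exact: Lfun2_mul_Lfun1. Qed.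

Lemma Lfun_scale' d (T : measurableType d) (R : realType) (P : probability T R)
  (a : R) (f : T -> R) (r : R) :
  (1 <= r) -> f \in Lfun P r%:E -> (fun w => a * f w) \in Lfun P r%:E.
Proof.
move=> h1 h2; rewrite (_ : (fun w => a * f w) = (a \o* f)%R); first exact: Lfun_scale.
by apply/funext => w /=; rewrite mulrC.
Qed.

Lemma ER_sq_sum d (T : measurableType d) (R : realType) (P : probability T R)
  (J : finType) (c : J -> R) (e : J -> T -> R) :
  (forall j, e j \in Lfun P 2%:E) ->
  ER P (fun w => (\sum_j c j * e j w) ^+ 2)
  = \sum_i \sum_j c i * c j * ER P (fun w => e i w * e j w).
Proof.
move=> he.
rewrite (_ : (fun w => _) = (fun w => \sum_i \sum_j c i * c j * (e i w * e j w))); last first.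
  apply/funext => w; rewrite expr2 mulr_suml; apply: eq_bigr => i _.
  rewrite mulr_sumr; apply: eq_bigr => j _.
  by rewrite mulrACA.
rewrite ER_fsum; last first.
  move=> i _; apply: Lfun_fsum => // j _; apply: Lfun_scale' => //.
  exact: Lfun_mul1.
apply: eq_bigr => i _; rewrite ER_fsum; last first.
  move=> j _; apply: Lfun_scale' => //; exact: Lfun_mul1.
apply: eq_bigr => j _; rewrite ER_scale //; exact: Lfun_mul1.
Qed.

Lemma ER_cross d (T : measurableType d) (R : realType) (P : probability T R)
  (J : finType) (c : J -> R) (e : J -> T -> R) (D : T -> R) :
  D \in Lfun P 2%:E -> (forall j, e j \in Lfun P 2%:E) ->
  ER P (fun w => D w * \sum_j c j * e j w)
  = \sum_j c j * ER P (fun w => D w * e j w).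
Proof.
move=> hD he.
rewrite (_ : (fun w => _) = (fun w => \sum_j c j * (D w * e j w))); last first.
  apply/funext => w; rewrite mulr_sumr; apply: eq_bigr => j _.
  by rewrite mulrCA.
rewrite ER_fsum; last first.
  move=> j _; apply: Lfun_scale' => //; exact: Lfun_mul1.
apply: eq_bigr => j _; rewrite ER_scale //; exact: Lfun_mul1.
Qed.

Lemma ER_comb d (T : measurableType d) (R : realType) (P : probability T R)
  (a b : R) (D W : T -> R) :
  D \in Lfun P 2%:E -> W \in Lfun P 2%:E ->
  ER P (fun w => (a * D w + b * W w) ^+ 2)
  = a ^+ 2 * ER P (fun w => D w * D w) + 2 * a * b * ER P (fun w => D w * W w)
    + b ^+ 2 * ER P (fun w => W w * W w).
Proof.
move=> hD hW.
rewrite (_ : (fun w => _) = (fun w => (a ^+ 2 * (D w * D w) + 2 * a * b * (D w * W w))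
    + b ^+ 2 * (W w * W w))); last first.
  by apply/funext => w; ring.
have L1 := Lfun_mul1 hD hD. have L2 := Lfun_mul1 hD hW. have L3 := Lfun_mul1 hW hW.
rewrite ER_add; last 2 first.
- by apply: rpredD; apply: Lfun_scale' => //.
- by apply: Lfun_scale' => //.
rewrite ER_add; [|by apply: Lfun_scale'..].
by rewrite !ER_scale.
Qed.

Lemma ER_sq_sum2 d (T : measurableType d) (R : realType) (P : probability T R)
  (I1 I2 : finType) (c : I1 -> I2 -> R) (e : I1 -> I2 -> T -> R) :
  (forall i j, e i j \in Lfun P 2%:E) ->
  ER P (fun w => (\sum_i \sum_j c i j * e i j w) ^+ 2)
  = \sum_i \sum_j \sum_k \sum_l c i j * c k l * ER P (fun w => e i j w * e k l w).
Proof.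
move=> he.
rewrite (_ : (fun w => _) = (fun w => (\sum_(p : I1 * I2) c p.1 p.2 * e p.1 p.2 w) ^+ 2)); last first.
  by apply/funext => w; rewrite pair_bigA.
rewrite (@ER_sq_sum _ _ _ P _ (fun p : I1 * I2 => c p.1 p.2) (fun p => e p.1 p.2)); last by move=> p; apply: he.
rewrite [RHS]pair_bigA; apply: eq_bigr => p _; by rewrite pair_bigA.
Qed.
Lemma inf_cmp (R : realType) (U V : Type) (A : set U) (B : set V)
  (f : U -> \bar R) (g : V -> \bar R) :
  (forall v, B v -> exists2 u, A u & (f u <= g v)%E) ->
  (ereal_inf [set f u | u in A] <= ereal_inf [set g v | v in B])%E.
Proof.
move=> h; apply: le_ereal_inf_tmp => _ [v Bv <-].
have [u Au fg] := h v Bv.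
apply: le_trans fg; apply: ereal_inf_lbound; by exists u.
Qed.

Lemma Q_decomp (R : realType) (S : finType) (N : nat) (yn : 'I_N -> {set S})
  (sigma : S -> S -> R) (c : S -> 'I_N -> R) :
  \sum_s \sum_n \sum_t \sum_m c s n * c t m *
    (if [&& s \in yn n, t \in yn m & n == m] then sigma s t else 0)
  = \sum_s \sum_t sigma s t *
      \sum_n (if (s \in yn n) && (t \in yn n) then c s n * c t n else 0).
Proof.
apply: eq_bigr => s _.
rewrite exchange_big /=; apply: eq_bigr => t _.
rewrite mulr_sumr; apply: eq_bigr => n _.
rewrite (bigD1 n) //= big1 ?addr0; last first.
  by move=> m /negbTE nm; rewrite eq_sym nm !andbF mulr0.
rewrite eqxx andbT; case: ifP => _; last by rewrite !mulr0.
by rewrite mulrC.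
Qed.

Lemma Kg_val (R : realType) (S : finType) (N : nat) (yn : 'I_N -> {set S})
  (y : {set S}) (Pn : pred 'I_N) (s t : S) :
  (forall n, Pn n -> y \subset yn n) -> (0 < #|[set n | Pn n]%SET|)%N ->
  \sum_n (if (s \in yn n) && (t \in yn n) then
     (if (s \in y) && Pn n then (#|[set n | Pn n]%SET|%:R)^-1 else 0) *
     (if (t \in y) && Pn n then (#|[set n | Pn n]%SET|%:R)^-1 else 0) else 0)
  = if (s \in y) && (t \in y) then (#|[set n | Pn n]%SET|%:R : R)^-1 else 0.
Proof.
move=> hsub hK.
set K := #|[set n | Pn n]%SET|.
have hK0 : K%:R != 0 :> R by rewrite pnatr_eq0 -lt0n.
case: (boolP (s \in y)) => sy /=; last first.
  by apply: big1 => n _; case: ifP => //; rewrite mul0r.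
case: (boolP (t \in y)) => ty /=; last first.
  by apply: big1 => n _; case: ifP => //; rewrite mulr0.
rewrite (eq_bigr (fun n => if Pn n then (K%:R)^-1 * (K%:R)^-1 else 0)); last first.
  move=> n _; case: (boolP (Pn n)) => pn.
    by rewrite (fintype.subsetP (hsub n pn) s sy) (fintype.subsetP (hsub n pn) t ty).
  by case: ifP => //; rewrite mul0r.
rewrite -big_mkcond /= sum_const_filter.
by field.
Qed.

Lemma Kseg_val (R : realType) (S : finType) (N : nat) (yn : 'I_N -> {set S})
  (y : {set S}) (s t : S) :
  \sum_n (if (s \in yn n) && (t \in yn n) then
     (if s \in y then ((Nseg yn s)%:R)^-1 else 0) *
     (if t \in y then ((Nseg yn t)%:R)^-1 else 0) else 0)
  = if (s \in y) && (t \in y) then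
      #|[set n | (s \in yn n) && (t \in yn n)]%SET|%:R * (((Nseg yn s)%:R)^-1 * ((Nseg yn t)%:R : R)^-1)
    else 0.
Proof.
case: (boolP (s \in y)) => sy /=; last first.
  by apply: big1 => n _; case: ifP => //; rewrite mul0r.
case: (boolP (t \in y)) => ty /=; last first.
  by apply: big1 => n _; case: ifP => //; rewrite mulr0.
by rewrite -big_mkcond /= sum_const_filter.
Qed.

Lemma inv_nat_le (R : realType) (k b : nat) : (0 < k)%N -> (k <= b)%N ->
  (b%:R : R)^-1 <= (k%:R : R)^-1.
Proof.
move=> hk hkb.
have hb : (0 < b)%N by apply: leq_trans hkb.
rewrite lef_pV2 ?ler_nat // posrE ltr0n //.
Qed.

Lemma ratio_le (R : realType) (c a b k : nat) : (c <= a)%N -> (0 < k)%N -> (k <= b)%N ->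
  (0 < a)%N ->
  (c%:R : R) * ((a%:R)^-1 * (b%:R)^-1) <= (k%:R)^-1.
Proof.
move=> hca hk hkb ha.
rewrite mulrA -[leRHS]mul1r.
apply: ler_pM.
- by rewrite mulr_ge0 // invr_ge0.
- by rewrite invr_ge0.
- by rewrite ler_pdivrMr ?ltr0n // mul1r ler_nat.
- exact: inv_nat_le.
Qed.

Lemma same_route_mem (S : finType) (N : nat) (yn : 'I_N -> {set S}) (y : {set S}) n :
  (yn n \in same_route_nb yn y) = (yn n == y).
Proof.
apply/imsetP/eqP => [[m]|e].
  by rewrite inE => /eqP <- ->.
by exists n; rewrite ?inE ?e.
Qed.

Unset Implicit Arguments.

Theorem proposition2p6 (d : measure_display) (T : measurableType d) (R : realType)
  (P : probability T R) (S : finType) (N : nat)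
  (yn : 'I_N -> {set S}) (y : {set S})
  (theta : S -> {RV P >-> R}) (eps : 'I_N -> S -> {RV P >-> R})
  (mu tau2 : R) (sigma : S -> S -> R) :
  (forall n, yn n != finset.set0) ->
  y != finset.set0 ->
  (* theta_s : i.i.d. with mean mu and variance tau2 > 0 *)
  0 < tau2 ->
  (forall s, (theta s : T -> R) \in Lfun P 2%E) ->
  (forall s, ('E_P[theta s] = mu%:E)%E) ->
  (forall s, ('V_P[theta s] = tau2%:E)%E) ->
  (forall s t (B : set R), measurable B ->
     P (theta s @^-1` B) = P (theta t @^-1` B)) ->
  (* errors of trip n: mean 0, covariances sigma *)
  (forall n s, s \in yn n -> (eps n s : T -> R) \in Lfun P 2%E) ->
  (forall n s, s \in yn n -> ('E_P[eps n s] = 0)%E) ->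
  (forall n s t, s \in yn n -> t \in yn n ->
     covariance P (eps n s) (eps n t) = (sigma s t)%:E) ->
  (* independence: theta_s's, and the error vectors of distinct trips *)
  groups_independent P (@rv_group S N) (rv_relevant yn)
    (rv_family (fun s => (theta s : T -> R)) (fun n s => (eps n s : T -> R))) ->
  (* nonnegative error covariances on y *)
  (forall s t, s \in y -> t \in y -> 0 <= sigma s t) ->
  let th := fun s => (theta s : T -> R) in
  let ep := fun n s => (eps n s : T -> R) in
  (opt_risk P th y (seg_weights yn) (seg_est yn th ep mu y)
   <= opt_risk P th y (gseg_weights yn) (gseg_est yn th ep mu [set y])
   <= opt_risk P th y (route_weights yn (same_route_nb yn y))
        (route_est yn th ep mu y (same_route_nb yn y)))%E.
Proof.
move=> Hne Hy tau0 Lth Eth Vth Dth Lep Eep Cep Hind Hsig; cbv zeta.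
set th := fun s => (theta s : T -> R).
set ep := fun n s => (eps n s : T -> R).
have Lth' : forall s, th s \in Lfun P 2%:E by move=> s; exact: Lth.
have Lep' : forall n s, s \in yn n -> ep n s \in Lfun P 2%:E by move=> n s h; exact: Lep.
pose e := fun (s : S) (n : 'I_N) (w : T) => if s \in yn n then ep n s w else 0.
have Le : forall s n, e s n \in Lfun P 2%:E.
  move=> s n; rewrite /e; case: (boolP (s \in yn n)) => h.
    by rewrite (_ : (fun w => _) = ep n s) //; exact: Lep'.
  by rewrite (_ : (fun w => _) = cst 0) //; exact: Lfun_cst.
pose D := fun w => \sum_(s in y) (mu - th s w).
have LD : D \in Lfun P 2%:E.
  apply: Lfun_fsum => [|s _]; first by rewrite lee_fin ler1n.
  rewrite (_ : (fun w => mu - th s w) = (cst mu \- th s)%R) //.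
  apply: rpredB; [by rewrite lee_fin ler1n | move=> ?; exact: Lfun_cst | move=> ?; exact: Lth'].
have L21 : forall f : T -> R, f \in Lfun P 2%:E -> f \in Lfun P 1.
  move=> f hf; apply: Lfun_subset12 hf.
  exact: fin_num_measure.
have Ee : forall s n, ER P (e s n) = 0.
  move=> s n; rewrite /e; case: (boolP (s \in yn n)) => h.
    by rewrite (_ : (fun w => _) = ep n s) // /ER Eep.
  exact: ER_cst.
have pairI := groups_indep_pair Hind.
have indEE : forall s n t m, s \in yn n -> t \in yn m -> n != m ->
    ER P (fun w => ep n s w * ep m t w) = 0.
  move=> s n t m hs ht nm.
  have := @indep_expM _ _ _ P (eps n s) (eps m t) (L21 _ (Lep' _ _ hs)) (L21 _ (Lep' _ _ ht))
    (Lfun_mul1 (Lep' _ _ hs) (Lep' _ _ ht)).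
  move=> /(_ (pairI (inr (n, s)) (inr (m, t)) _ _ _)).
  rewrite !inE /= hs ht => /(_ isT isT).
  have -> : (inr n != inr m :> (S + 'I_N)%type) by [].
  move=> /(_ isT) E.
  transitivity (fine ('E_P[(eps n s \* eps m t)%R])%E); first by [].
  by rewrite E (Eep _ _ hs) mul0e.
have covE : forall s t n, s \in yn n -> t \in yn n ->
    ER P (fun w => ep n s w * ep n t w) = sigma s t.
  move=> s t n hs ht.
  have := Cep n s t hs ht.
  rewrite covarianceE; last 3 first.
  - exact: L21 (Lep' _ _ hs).
  - exact: L21 (Lep' _ _ ht).
  - exact: Lfun_mul1 (Lep' _ _ hs) (Lep' _ _ ht).
  rewrite (Eep _ _ hs) (Eep _ _ ht) mul0e sube0 => E.
  transitivity (fine ('E_P[(eps n s * eps n t)%R])%E); first by [].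
  by rewrite E.
have thE : forall s t m, t \in yn m -> ER P (fun w => th s w * ep m t w) = 0.
  move=> s t m ht.
  have := @indep_expM _ _ _ P (theta s) (eps m t) (L21 _ (Lth' s)) (L21 _ (Lep' _ _ ht))
    (Lfun_mul1 (Lth' s) (Lep' _ _ ht)).
  move=> /(_ (pairI (inl s) (inr (m, t)) _ _ _)).
  rewrite !inE /= ht => /(_ isT isT isT) E.
  transitivity (fine ('E_P[(theta s \* eps m t)%R])%E); first by [].
  by rewrite E (Eep _ _ ht) mule0.
have EE : forall s n t m, ER P (fun w => e s n w * e t m w)
    = if [&& s \in yn n, t \in yn m & n == m] then sigma s t else 0.
  move=> s n t m; rewrite /e.
  case: (boolP (s \in yn n)) => hs /=; last first.
    transitivity (ER P (fun _ => 0)); last exact: ER_cst.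
    by congr (ER P _); apply/funext => w; rewrite mul0r.
  case: (boolP (t \in yn m)) => ht /=; last first.
    transitivity (ER P (fun _ => 0)); last exact: ER_cst.
    by congr (ER P _); apply/funext => w; rewrite mulr0.
  case: eqVneq => [em|nm]; first by subst m; exact: (covE _ _ _ hs ht).
  exact: (indEE _ _ _ _ hs ht nm).
have ED : forall t m, ER P (fun w => D w * e t m w) = 0.
  move=> t m.
  have Lthe : forall s, (fun w => th s w * e t m w) \in Lfun P 1.
    by move=> s; apply: Lfun_mul1.
  rewrite (_ : (fun w => D w * e t m w)
     = (fun w => \sum_(s in y) (mu * e t m w + (-1) * (th s w * e t m w)))); last first.
    apply/funext => w; rewrite /D mulr_suml; apply: eq_bigr => s _; ring.
  rewrite ER_fsum; last first.
    move=> s _; apply: rpredD; [apply: Lfun_scale' => //; exact: L21 | exact: Lfun_scale'].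
  apply: big1 => s _.
  rewrite ER_add; last 2 first.
  - apply: Lfun_scale' => //; exact: L21.
  - exact: Lfun_scale'.
  rewrite !ER_scale //; last exact: L21.
  rewrite Ee mulr0 add0r.
  case: (boolP (t \in yn m)) => ht.
    rewrite (_ : (fun w => th s w * e t m w) = (fun w => th s w * ep m t w)).
      by rewrite thE // mulr0.
    by apply/funext => w; rewrite /e ht.
  rewrite (_ : (fun w => th s w * e t m w) = (fun _ => 0)); first by rewrite ER_cst mulr0.
  by apply/funext => w; rewrite /e (negbTE ht) mulr0.
have L2add : forall f g : T -> R, f \in Lfun P 2%:E -> g \in Lfun P 2%:E ->
    (fun w => f w + g w) \in Lfun P 2%:E.
  move=> f g hf hg.
  rewrite (_ : (fun w => f w + g w) = (f \+ g)%R) //.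
  by apply: rpredD; [by rewrite lee_fin ler1n | move=> ?; exact: hf | move=> ?; exact: hg].
pose W := fun (c : S -> 'I_N -> R) (w : T) => \sum_s \sum_n c s n * e s n w.
have LW : forall c, W c \in Lfun P 2%:E.
  move=> c; apply: Lfun_fsum => [|s _]; first by rewrite lee_fin ler1n.
  apply: Lfun_fsum => [|n _]; first by rewrite lee_fin ler1n.
  by apply: Lfun_scale' => //; rewrite ler1n.
pose KD := ER P (fun w => D w * D w).
pose Q := fun c : S -> 'I_N -> R =>
  \sum_s \sum_n \sum_t \sum_m c s n * c t m * ER P (fun w => e s n w * e t m w).
have riskE : forall (est : T -> R) (p : R) c,
    (forall w, est w - \sum_(s in y) th s w = (1 - p) * D w + p * W c w) ->
    risk P th y est = ((1 - p) ^+ 2 * KD + p ^+ 2 * Q c)%:E.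
  move=> est p c h.
  have LZ : (fun w => (1 - p) * D w + p * W c w) \in Lfun P 2%:E.
    by apply: L2add; apply: Lfun_scale' => //; rewrite ler1n.
  rewrite /risk (_ : (fun w => _) = (fun w => ((1 - p) * D w + p * W c w) ^+ 2)); last first.
    by apply/funext => w; rewrite h.
  rewrite ER_E; last first.
    rewrite (_ : (fun w => _) = (fun w => ((1 - p) * D w + p * W c w) * ((1 - p) * D w + p * W c w))).
      exact: Lfun_mul1.
    by apply/funext => w; rewrite expr2.
  congr (_%:E).
  rewrite ER_comb //.
  have -> : ER P (fun w => D w * W c w) = 0.
    rewrite (_ : (fun w => D w * W c w)
      = (fun w => D w * \sum_(q : S * 'I_N) c q.1 q.2 * e q.1 q.2 w)); last first.
      by apply/funext => w; rewrite /W pair_bigA.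
    rewrite (@ER_cross _ _ _ P _ (fun q : S * 'I_N => c q.1 q.2) (fun q => e q.1 q.2)) //.
    by apply: big1 => q _; rewrite ED mulr0.
  have -> : ER P (fun w => W c w * W c w) = Q c.
    rewrite (_ : (fun w => W c w * W c w) = (fun w => (\sum_s \sum_n c s n * e s n w) ^+ 2)); last first.
      by apply/funext => w; rewrite expr2.
    by rewrite ER_sq_sum2.
  by rewrite mulr0 addr0.
have QE : forall c, Q c = \sum_s \sum_t sigma s t *
    \sum_n (if (s \in yn n) && (t \in yn n) then c s n * c t n else 0).
  move=> c; rewrite -Q_decomp /Q; apply: eq_bigr => s _; apply: eq_bigr => n _.
  apply: eq_bigr => t _; apply: eq_bigr => m _; by rewrite EE.
have Qle : forall c1 c2 : S -> 'I_N -> R,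
    (forall s n, s \notin y -> c1 s n = 0) -> (forall s n, s \notin y -> c2 s n = 0) ->
    (forall s t, s \in y -> t \in y ->
       \sum_n (if (s \in yn n) && (t \in yn n) then c1 s n * c1 t n else 0)
       <= \sum_n (if (s \in yn n) && (t \in yn n) then c2 s n * c2 t n else 0)) ->
    Q c1 <= Q c2.
  move=> c1 c2 h1 h2 h; rewrite !QE; apply: ler_sum => s _; apply: ler_sum => t _.
  case: (boolP (s \in y)) => sy; last first.
    rewrite !big1 ?mulr0 // => n _; case: ifP => // _.
      by rewrite h2 // mul0r.
    by rewrite h1 // mul0r.
  case: (boolP (t \in y)) => ty; last first.
    rewrite !big1 ?mulr0 // => n _; case: ifP => // _.
      by rewrite (h2 t) // mulr0.
    by rewrite (h1 t) // mulr0.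
  by apply: ler_wpM2l; [exact: Hsig | exact: h].
set Ky := #|[set n | y \subset yn n]%SET|.
have Ky_le : forall s, s \in y -> (Ky <= #|[set n | s \in yn n]%SET|)%N.
  move=> s sy; apply: subset_leq_card; apply/fintype.subsetP => n; rewrite !inE.
  by move=> /fintype.subsetP; apply.
pose cg := fun s n => if (s \in y) && (y \subset yn n) then (Ky%:R : R)^-1 else 0.
have gid : forall p (w : T), (0 < Ky)%N ->
    gseg_est yn th ep mu [set y]%SET (fun _ => p) w - \sum_(s in y) th s w
    = (1 - p) * D w + p * W cg w.
  move=> p w hK; rewrite /gseg_est big_set1 NsupE.
  exact: (@G_ident _ _ _ yn y (fun n => y \subset yn n) p mu (fun s => th s w) (fun n s => ep n s w) (fun n h => h) hK).
apply/andP; split.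
- apply: inf_cmp => phi hphi.
  case: (posnP (Nsup yn y)) => hNy.
  + have phi0 : phi y = 0 := hphi y hNy.
    exists (fun _ => 0); first by [].
    rewrite le_eqVlt; apply/orP; left; apply/eqP; congr (risk _ _ _ _).
    apply/funext => w; rewrite /seg_est /gseg_est big_set1 phi0.
    rewrite (eq_bigr (fun _ => mu)); last by move=> s _; rewrite subr0 mul1r mul0r addr0.
    by rewrite sumr_const subr0 mul1r mul0r addr0 mulr_natl.
  + set p := phi y.
    have hK : (0 < Ky)%N by rewrite /Ky -NsupE.
    pose psi := fun s => if Nseg yn s == 0%N then 0 else p.
    have Ns_pos : forall s, s \in y -> (0 < Nseg yn s)%N.
      by move=> s sy; rewrite NsegE; apply: leq_trans hK (Ky_le s sy).
    exists psi; first by move=> s; rewrite /psi => ->.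
    pose cs := fun s (n : 'I_N) => if s \in y then ((Nseg yn s)%:R : R)^-1 else 0.
    rewrite (riskE _ p cs); last first.
      move=> w; apply: (@S_ident _ _ _ yn y p mu psi (fun s => th s w) (fun n s => ep n s w) _ Ns_pos).
      move=> s sy; rewrite /psi; have := Ns_pos s sy.
      by case: eqP => // ->.
    have -> : gseg_est yn th ep mu [set y]%SET phi = gseg_est yn th ep mu [set y]%SET (fun _ => p).
      by apply/funext => w; rewrite /gseg_est !big_set1.
    rewrite (riskE _ p cg); last by move=> w; apply: gid.
    rewrite lee_fin lerD2l; apply: ler_wpM2l; first exact: sqr_ge0.
    apply: Qle.
    * by move=> s n /negbTE h; rewrite /cs h.
    * by move=> s n /negbTE h; rewrite /cg h.
    * move=> s t sy ty; rewrite /cs /cg.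
      rewrite Kseg_val (@Kg_val R _ _ yn y (fun n => y \subset yn n) s t) // sy ty /=.
      rewrite !NsegE; apply: ratio_le => //.
      - by apply: subset_leq_card; apply/fintype.subsetP => n; rewrite !inE => /andP[].
      - exact: Ky_le.
      - by rewrite -NsegE; exact: Ns_pos.
- apply: inf_cmp => phi hphi.
  set dl := same_route_nb yn y.
  set Km := #|[set n | yn n == y]%SET|.
  have MnbE' : Mnb yn dl = Km.
    by rewrite MnbE; apply: eq_card => n; rewrite !inE same_route_mem.
  case: (posnP Km) => hM.
  + have phi0 : phi = 0 by apply: hphi; rewrite MnbE'.
    exists (fun _ => 0); first by [].
    rewrite le_eqVlt; apply/orP; left; apply/eqP; congr (risk _ _ _ _).
    by apply/funext => w; rewrite /gseg_est /route_est big_set1 phi0 !mul0r.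
  + exists (fun A => if Nsup yn A == 0%N then 0 else phi).
      by move=> A ->; rewrite eqxx.
    have KmKy : (Km <= Ky)%N.
      apply: subset_leq_card; apply/fintype.subsetP => n; rewrite !inE.
      by move=> /eqP ->.
    have hK : (0 < Ky)%N by apply: leq_trans hM KmKy.
    have -> : gseg_est yn th ep mu [set y]%SET (fun A => if Nsup yn A == 0%N then 0 else phi)
        = gseg_est yn th ep mu [set y]%SET (fun _ => phi).
      apply/funext => w; rewrite /gseg_est !big_set1.
      have : Nsup yn y != 0%N by rewrite NsupE -lt0n.
      by move=> /negbTE ->.
    rewrite (riskE _ phi cg); last by move=> w; apply: gid.
    pose cr := fun s n => if (s \in y) && (yn n == y) then (Km%:R : R)^-1 else 0.
    rewrite (riskE _ phi cr); last first.
      move=> w; rewrite /route_est MnbE'.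
      have -> : \sum_(n | yn n \in dl) \sum_(s in yn n) Tobs th ep n s w
          = \sum_(n | yn n == y) \sum_(s in y) Tobs th ep n s w.
        rewrite (eq_bigl (fun n => yn n == y)); last by move=> n; rewrite same_route_mem.
        by apply: eq_bigr => n /eqP ->.
      apply: (@G_ident _ _ _ yn y (fun n => yn n == y) phi mu (fun s => th s w) (fun n s => ep n s w) _ hM).
      by move=> n /eqP ->.
    rewrite lee_fin lerD2l; apply: ler_wpM2l; first exact: sqr_ge0.
    apply: Qle.
    * by move=> s n /negbTE h; rewrite /cg h.
    * by move=> s n /negbTE h; rewrite /cr h.
    * move=> s t sy ty; rewrite /cg /cr.
      rewrite (@Kg_val R _ _ yn y (fun n => y \subset yn n) s t) //.
      rewrite (@Kg_val R _ _ yn y (fun n => yn n == y) s t) //; last by move=> n /eqP ->.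
      by rewrite sy ty /=; apply: inv_nat_le.
Qed.
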